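(* For every finite graph $G=(V,E)$ with $N$ vertices and every function $f:V\to\mathbb{R}$, the size of a minimum vertex cover of (the underlying undirected graph of) the violation graph $B_{0,f}$ equals $N\cdot\ell_0(f,\mathrm{Lip})$.
   Context: $\mathrm{dist}_G$ is the shortest-path distance; $g$ is Lipschitz if $|g(x)-g(y)|\le\mathrm{dist}_G(x,y)$ for all $x,y$, and $\mathrm{Lip}$ is the set of Lipschitz functions. $\ell_0(f,\mathrm{Lip})=\min_{g\in\mathrm{Lip}}\Pr_x[f(x)\ne g(x)]$ with $x$ uniform in $V$. $VS_f(x,y)=|f(x)-f(y)|-\mathrm{dist}_G(x,y)$ if positive, else $0$; $B_{0,f}$ has an edge $(x,y)$ iff $VS_f(x,y)>0$ and $f(x)<f(y)$. *)

(* Defs.v *)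
From HB Require Import structures.
From mathcomp Require Import all_boot all_order all_algebra.
From mathcomp Require Import reals.
Set Implicit Arguments. Unset Strict Implicit. Unset Printing Implicit Defensive.
Import Order.TTheory GRing.Theory Num.Theory.
Local Open Scope ring_scope.

Section Graph.
Variables (V : finType) (E : rel V).

Definition simple_graph := symmetric E /\ irreflexive E.

Fixpoint walk (k : nat) (x y : V) : bool :=
  if k is k'.+1 then [exists z, E x z && walk k' z y] else x == y.

(* shortest-path distance; None = +infinity (x, y in different components).
   A shortest walk always has fewer than #|V| edges. *)
Definition distG (x y : V) : option nat :=
  let i := find (fun k => walk k x y) (iota 0 #|V|) in
  if (i < #|V|)%N then Some i else None.

Variable R : realType.

Definition lipschitz (g : V -> R) : Prop :=
  forall x y d, distG x y = Some d -> `|g x - g y| <= d%:R.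

Definition VS (f : V -> R) (x y : V) : R :=
  match distG x y with
  | Some d => Num.max (`|f x - f y| - d%:R) 0
  | None => 0
  end.

Definition B0 (f : V -> R) (x y : V) : bool := (0 < VS f x y) && (f x < f y).

Definition vertex_cover (f : V -> R) (C : {set V}) : Prop :=
  forall x y, B0 f x y -> (x \in C) || (y \in C).

Definition min_vertex_cover (f : V -> R) (C : {set V}) : Prop :=
  vertex_cover f C /\ forall C' : {set V}, vertex_cover f C' -> (#|C| <= #|C'|)%N.

Definition disagree (f g : V -> R) : R :=
  #|[set x | f x != g x]|%:R / #|V|%:R.

Definition is_l0 (f : V -> R) (l : R) : Prop :=
  (exists2 g, lipschitz g & disagree f g = l) /\
  (forall g, lipschitz g -> l <= disagree f g).

End Graph.

(* Main.v *)
Require Import Defs.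
From HB Require Import structures.
From mathcomp Require Import all_boot all_order all_algebra.
From mathcomp Require Import reals.
From mathcomp Require Import lra zify.
Import Order.TTheory GRing.Theory Num.Theory.
Local Open Scope ring_scope.
Set Implicit Arguments. Unset Strict Implicit.

Lemma walk_cat (V : finType) (E : rel V) a b x y z :
  walk E a x y -> walk E b y z -> walk E (a + b) x z.
Proof.
elim: a x => [|a IH] x /=; first by move/eqP->.
move=> /existsP [w /andP [Exw Hw]] Hyz.
apply/existsP; exists w; rewrite Exw /=; exact: IH Hw Hyz.
Qed.

Lemma walk_last (V : finType) (E : rel V) k x y :
  walk E k.+1 x y = [exists z, walk E k x z && E z y].
Proof.
apply/idP/idP.
- elim: k x => [|k IH] x /=.
    move/existsP=> [w /andP [Exw /eqP Hw]]; subst w.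
    by apply/existsP; exists x; rewrite eqxx Exw.
  case/existsP => w /andP [Exw Hw].
  have [z /andP [Hwz Ezy]] := existsP (IH _ Hw).
  apply/existsP; exists z; rewrite Ezy andbT; apply/existsP; exists w.
  by rewrite Exw Hwz.
- case/existsP=> z /andP [H1 H2]; rewrite -addn1; apply: walk_cat H1 _.
  by rewrite /=; apply/existsP; exists y; rewrite H2 eqxx.
Qed.

Lemma walk_sym (V : finType) (E : rel V) (Es : symmetric E) k x y :
  walk E k x y = walk E k y x.
Proof.
elim: k x y => [|k IH] x y; first by rewrite /= eq_sym.
rewrite walk_last /=; apply: eq_existsb => z.
by rewrite IH Es andbC.
Qed.

Definition Aset (V : finType) (E : rel V) (y : V) k :=
  [set z | [exists j : 'I_k.+1, walk E j z y]].

Lemma Aset_S (V : finType) (E : rel V) y k :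
  Aset E y k.+1 = y |: [set z | [exists w in Aset E y k, E z w]].
Proof.
apply/setP => z; rewrite !inE; apply/existsP/idP.
- case => [[[|j] Hj]] /= H; first by rewrite (eqP H) eqxx.
  case/existsP: H => w /andP [Ezw Hw].
  apply/orP; right; apply/existsP; exists w; rewrite inE Ezw andbT.
  by apply/existsP; exists (Ordinal (Hj : (j < k.+1)%N)).
- case/orP => [/eqP -> | /existsP [w /andP [Hw Ezw]]].
    by exists ord0; rewrite /= eqxx.
  rewrite inE in Hw; case/existsP: Hw => j Hj.
  exists (Ordinal (ltn_ord j : (j.+1 < k.+2)%N)) => /=.
  by apply/existsP; exists w; rewrite Ezw Hj.
Qed.

Lemma Aset_mono (V : finType) (E : rel V) y k :
  Aset E y k \subset Aset E y k.+1.
Proof.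
apply/subsetP => z; rewrite !inE => /existsP [j Hj]; apply/existsP.
by exists (widen_ord (leqnSn _) j).
Qed.

Lemma Aset_stable (V : finType) (E : rel V) y j i :
  Aset E y j = Aset E y j.+1 -> Aset E y (j + i) = Aset E y j.
Proof.
move=> H; elim: i => [|i IH]; first by rewrite addn0.
by rewrite addnS Aset_S IH -Aset_S -H.
Qed.

Lemma Aset_card (V : finType) (E : rel V) y k :
  (k < #|Aset E y k|)%N || [exists j : 'I_k, Aset E y j == Aset E y j.+1].
Proof.
elim: k => [|k IH].
  rewrite card_gt0; apply/orP; left; apply/set0Pn; exists y; rewrite inE.
  by apply/existsP; exists ord0; rewrite /= eqxx.
case: (boolP (Aset E y k == Aset E y k.+1)) => Heq.
  by apply/orP; right; apply/existsP; exists ord_max.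
case/orP: IH => [Hk | /existsP [j Hj]].
  apply/orP; left.
  have Hp : Aset E y k \proper Aset E y k.+1 by rewrite properEneq Heq Aset_mono.
  exact: leq_ltn_trans Hk (proper_card Hp).
by apply/orP; right; apply/existsP; exists (widen_ord (leqnSn _) j).
Qed.

Lemma walk_short (V : finType) (E : rel V) m x y :
  walk E m x y -> exists j, [/\ (j <= m)%N, (j < #|V|)%N & walk E j x y].
Proof.
case: (ltnP m #|V|) => Hm Hw; first by exists m; split.
have := Aset_card E y #|V|; rewrite ltnNge max_card /=.
case/existsP => j /eqP Hj.
have Hx : x \in Aset E y m by rewrite inE; apply/existsP; exists ord_max.
have Hjm : (j <= m)%N by exact: leq_trans (ltnW (ltn_ord j)) Hm.
have HA : Aset E y m = Aset E y j.
  by rewrite -(subnKC Hjm); apply: Aset_stable.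
rewrite HA inE in Hx; case/existsP: Hx => i Hi.
have Hij : (i <= j)%N by exact: (ltn_ord i).
exists i; split => //; first exact: leq_trans Hij Hjm.
exact: leq_ltn_trans Hij (ltn_ord j).
Qed.

Lemma distG_walk (V : finType) (E : rel V) x y d :
  distG E x y = Some d -> walk E d x y.
Proof.
rewrite /distG /=; case: ifP => // Hi [<-].
have Hh : has (fun k => walk E k x y) (iota 0 #|V|) by rewrite has_find size_iota.
by have := nth_find 0%N Hh; rewrite nth_iota // add0n.
Qed.

Lemma distG_le (V : finType) (E : rel V) m x y :
  walk E m x y -> exists2 d, distG E x y = Some d & (d <= m)%N.
Proof.
case/walk_short => j [Hjm Hjn Hw].
have Hij : (find (fun k => walk E k x y) (iota 0 #|V|) <= j)%N.
  rewrite leqNgt; apply/negP => Hlt.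
  by have := before_find 0%N Hlt; rewrite nth_iota // add0n Hw.
exists (find (fun k => walk E k x y) (iota 0 #|V|)); last exact: leq_trans Hij Hjm.
by rewrite /distG /= (leq_ltn_trans Hij Hjn).
Qed.

Lemma distG_refl (V : finType) (E : rel V) x : distG E x x = Some 0%N.
Proof.
have [d Hd] := @distG_le V E 0 x x (eqxx x).
by rewrite leqn0 => /eqP Hd0; rewrite Hd Hd0.
Qed.

Lemma distG_sym (V : finType) (E : rel V) (Es : symmetric E) x y :
  distG E x y = distG E y x.
Proof.
rewrite /distG /=.
have -> : find (fun k => walk E k x y) (iota 0 #|V|) =
          find (fun k => walk E k y x) (iota 0 #|V|).
  by apply: eq_find => k; exact: walk_sym.
by [].
Qed.

Lemma distG_tri (V : finType) (E : rel V) x y z a b :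
  distG E x y = Some a -> distG E y z = Some b ->
  exists2 c, distG E x z = Some c & (c <= a + b)%N.
Proof.
move=> /distG_walk H1 /distG_walk H2; exact: distG_le (walk_cat H1 H2).
Qed.

Unset Implicit Arguments.

Theorem claim3p3 (V : finType) (E : rel V) (R : realType) (f : V -> R) :
  simple_graph E ->
  exists l : R, is_l0 E f l /\
    forall C : {set V}, min_vertex_cover E f C -> #|C|%:R = #|V|%:R * l.
Proof.
move=> [Es _].
pose vcb (C : {set V}) := [forall x, forall y, B0 E f x y ==> (x \in C) || (y \in C)].
have vcP C : vertex_cover E f C <-> vcb C.
  split.
    by move=> H; apply/forallP => x; apply/forallP => y; apply/implyP; exact: H.
  by move=> /forallP H x y Hb; exact: (implyP (forallP (H x) y) Hb).
have lipD g : lipschitz E g -> vertex_cover E f [set x | f x != g x].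
  move=> Hg x y; rewrite /B0 /VS.
  case Hd : (distG E x y) => [d|]; last by rewrite ltxx.
  move=> /andP [Hv _]; rewrite !inE; apply/negPn/negP; rewrite negb_or !negbK.
  move=> /andP [/eqP Hx /eqP Hy]; have := Hg _ _ _ Hd; rewrite -Hx -Hy => Hle.
  by move: Hv; rewrite lt_max ltxx orbF subr_gt0 ltNge Hle.
have ext C : vertex_cover E f C ->
    exists2 g, lipschitz E g & [set x | f x != g x] \subset C.
  move=> HC; pose S := ~: C.
  have SL s t d : s \in S -> t \in S -> distG E s t = Some d ->
      `|f s - f t| <= d%:R.
    move=> Hs Ht Hd; rewrite leNgt; apply/negP => Hlt; rewrite !inE in Hs Ht.
    have HV : 0 < VS E f s t by rewrite /VS Hd lt_max subr_gt0 Hlt.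
    have HV' : 0 < VS E f t s.
      by rewrite /VS (distG_sym Es) Hd distrC lt_max subr_gt0 Hlt.
    case: (ltgtP (f s) (f t)) => Hst.
    - have := HC s t; rewrite /B0 HV Hst => /(_ isT).
      by rewrite (negbTE Hs) (negbTE Ht).
    - have := HC t s; rewrite /B0 HV' Hst => /(_ isT).
      by rewrite (negbTE Hs) (negbTE Ht).
    - by move: Hlt; rewrite Hst subrr normr0 ltNge ler0n.
  pose P v s := (s \in S) && (distG E s v != None).
  pose val v s := f s + (odflt 0%N (distG E s v))%:R.
  pose g v := if [pick s | P v s] is Some s0
              then val v [arg min_(s < s0 | P v s) val v s]%O else 0.
  have gP1 v s : P v s -> g v <= val v s.
    move=> Ps; rewrite /g; case: pickP => [s0 Hs0 | H0]; last by rewrite H0 in Ps.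
    by case: arg_minP => // s1 _ Hmin; apply: Hmin.
  have gP2 v : (exists s, P v s) -> exists2 s, P v s & g v = val v s.
    move=> [s Ps]; rewrite /g; case: pickP => [s0 Hs0 | H0].
      by case: arg_minP => // s1 Hs1 _; exists s1.
    by rewrite H0 in Ps.
  have gP3 v : ~~ [exists s, P v s] -> g v = 0.
    move=> Hn; rewrite /g; case: pickP => [s0 Hs0 | //].
    by case/negP: Hn; apply/existsP; exists s0.
  have gS v : v \in S -> g v = f v.
    move=> Hv.
    have Pv : P v v by rewrite /P Hv distG_refl.
    apply/eqP; rewrite eq_le; apply/andP; split.
      by have := gP1 _ _ Pv; rewrite /val distG_refl addr0.
    have [s /andP [Hs Hd] ->] := gP2 v (ex_intro _ v Pv).
    rewrite /val; case Hd' : (distG E s v) Hd => [d|] // _ /=.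
    have := SL _ _ _ Hs Hv Hd'; rewrite ler_norml => /andP [H1 H2]; lra.
  have gstep u v e : distG E u v = Some e -> (exists s, P v s) ->
      (exists s, P u s) /\ g u <= g v + e%:R.
    move=> Hd /gP2 [s /andP [Hs Hsv] Hg].
    case Hsv' : (distG E s v) Hsv => [ds|] // _.
    have Hvu : distG E v u = Some e by rewrite (distG_sym Es).
    have [c Hc Hcle] := distG_tri Hsv' Hvu.
    have Pu : P u s by rewrite /P Hs Hc.
    split; first by exists s.
    apply: le_trans (gP1 _ _ Pu) _.
    by rewrite Hg /val Hc Hsv' /= -addrA lerD2l -natrD ler_nat.
  exists g.
    move=> u v e Hd.
    case: (boolP [exists s, P v s]) => [/existsP Hv | Hv].
      have [Hu H1] := gstep _ _ _ Hd Hv.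
      have Hdvu : distG E v u = Some e by rewrite (distG_sym Es).
      have [_ H2] := gstep _ _ _ Hdvu Hu.
      rewrite ler_norml; apply/andP; split; lra.
    have Hu : ~~ [exists s, P u s].
      apply/negP => /existsP Hu.
      have Hdvu : distG E v u = Some e by rewrite (distG_sym Es).
      have [Hv' _] := gstep _ _ _ Hdvu Hu.
      by case/negP: Hv; apply/existsP.
    by rewrite (gP3 _ Hu) (gP3 _ Hv) subrr normr0 ler0n.
  apply/subsetP => x; rewrite inE => Hfx; apply/negPn/negP => HxC.
  by move: Hfx; rewrite gS ?inE ?eqxx.
have setT_vc : vcb setT.
  by apply/forallP => x; apply/forallP => y; rewrite in_setT implybT.
pose C0 := [arg min_(C < setT | vcb C) #|C|].
have [C0vc C0min] : vcb C0 /\ forall C, vcb C -> (#|C0| <= #|C|)%N.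
  by rewrite /C0; case: arg_minnP => // C HC Hmin; split.
exists (#|C0|%:R / #|V|%:R); split; [split|].
- have [g Hg Hsub] := ext C0 (proj2 (vcP C0) C0vc).
  exists g => //; rewrite /disagree.
  have -> : #|[set x | f x != g x]| = #|C0| => //.
  apply/eqP; rewrite eqn_leq subset_leq_card //=.
  by apply: C0min; apply/vcP; exact: lipD.
- move=> g Hg; rewrite /disagree.
  apply: ler_wpM2r; first by rewrite invr_ge0 ler0n.
  by rewrite ler_nat; apply: C0min; apply/vcP; exact: lipD.
- move=> C [HC Hmin].
  have -> : #|C| = #|C0|.
    apply/eqP; rewrite eqn_leq Hmin ?andbT; last exact/vcP.
    by apply: C0min; apply/vcP.
  case: (posnP #|V|) => Hn.
    have := max_card C0; rewrite Hn leqn0 => /eqP ->.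
    by rewrite (mulr0n (1 : R)) mul0r.
  by rewrite mulrC divfK // pnatr_eq0 -lt0n.
Qed.
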